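(* Let $(u,\phi)$ be a smooth solution of the periodic problem (PF-NS). Then for all $t>0$, $$\frac{d}{dt}\Big(\frac12\|u(t)\|^2+E(\phi(t))\Big)+\mu\|\nabla u\|^2+\gamma\Big\|\frac{\delta E}{\delta\phi}\Big\|^2=0.$$
   Context: Setting. $Q$ is the unit cube in $\mathbb R^3$ and all functions are $Q$-periodic; $\|\cdot\|$ is the $L^2(Q)$ norm. Fixed positive constants: $k,\varepsilon,\gamma,\mu,M_1,M_2$. For a scalar $\phi$: $f(\phi)=-\varepsilon\Delta\phi+\frac1\varepsilon(\phi^2-1)\phi$, $g(\phi)=-\Delta f(\phi)+\frac1{\varepsilon^2}(3\phi^2-1)f(\phi)$, $A(\phi)=\int_Q\phi$, $B(\phi)=\int_Q(\frac\varepsilon2|\nabla\phi|^2+\frac1{4\varepsilon}(\phi^2-1)^2)$, $E(\phi)=\frac{k}{2\varepsilon}\int_Q|f(\phi)|^2+\frac12M_1(A(\phi)-\alpha)^2+\frac12M_2(B(\phi)-\beta)^2$ with $\alpha=A(\phi_0)$, $\beta=B(\phi_0)$, and $\frac{\delta E}{\delta\phi}=kg(\phi)+M_1(A(\phi)-\alpha)+M_2(B(\phi)-\beta)f(\phi)$. Problem (PF-NS): $u_t+u\cdot\nabla u+\nabla P=\mu\Delta u+\frac{\delta E}{\delta\phi}\nabla\phi$, $\nabla\cdot u=0$, $\phi_t+u\cdot\nabla\phi=-\gamma\frac{\delta E}{\delta\phi}$, periodic in $x$, $u(0)=u_0$ (divergence free, zero mean), $\phi(0)=\phi_0$. *)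

(* Defs.v *)
From Stdlib Require Import Reals List.
From Coquelicot Require Import Coquelicot.
Open Scope R_scope.

Definition Pt : Type := (R * R * R)%type.

Definition coord (i : nat) (x : Pt) : R :=
  let '(a, b, c) := x in
  match i with 0%nat => a | 1%nat => b | _ => c end.

Definition upd (i : nat) (x : Pt) (s : R) : Pt :=
  let '(a, b, c) := x in
  match i with 0%nat => (s, b, c) | 1%nat => (a, s, c) | _ => (a, b, s) end.

Definition shift1 (i : nat) (x : Pt) : Pt := upd i x (coord i x + 1).

Definition sfield := Pt -> R.
Definition tfield := R -> Pt -> R.

Definition pd (i : nat) (g : sfield) : sfield :=
  fun x => Derive (fun s => g (upd i x s)) (coord i x).

Definition sum3 (F : nat -> R) : R := F 0%nat + F 1%nat + F 2%nat.

Definition lap (g : sfield) : sfield := fun x => sum3 (fun i => pd i (pd i g) x).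

Definition gradsq (g : sfield) : sfield := fun x => sum3 (fun i => (pd i g x)^2).

Definition intQ (g : sfield) : R :=
  RInt (fun a => RInt (fun b => RInt (fun c => g (a, b, c)) 0 1) 0 1) 0 1.

Definition nsq (g : sfield) : R := intQ (fun x => (g x)^2).

Definition dt (F : tfield) : tfield := fun t x => Derive (fun s => F s x) t.

(* Generic directional derivative: direction 0 = time, 1,2,3 = space x_1,x_2,x_3 *)
Definition Dir (d : nat) (F : tfield) : tfield :=
  match d with
  | 0%nat => dt F
  | S i => fun t => pd i (F t)
  end.

Definition iterD (l : list nat) (F : tfield) : tfield := fold_right Dir F l.

(* F is C^infinity on the open set {(t,x) : t > 0}: every iterated partial
   derivative exists and is jointly continuous there. *)
Definition smooth_pos (F : tfield) : Prop :=
  forall (l : list nat) (t : R) (x : Pt), 0 < t ->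
    ex_derive (fun s => iterD l F s x) t /\
    (forall i, (i < 3)%nat -> ex_derive (fun s => iterD l F t (upd i x s)) (coord i x)) /\
    continuous (fun p : R * Pt => iterD l F (fst p) (snd p)) (t, x).

Definition periodic (g : sfield) : Prop :=
  forall i x, (i < 3)%nat -> g (shift1 i x) = g x.

Section Energy.
Variables (k eps M1 M2 alpha beta : R).

Definition fphi (phi : sfield) : sfield :=
  fun x => - eps * lap phi x + / eps * ((phi x)^2 - 1) * phi x.

Definition gphi (phi : sfield) : sfield :=
  fun x => - lap (fphi phi) x + / (eps^2) * (3 * (phi x)^2 - 1) * fphi phi x.

Definition Aphi (phi : sfield) : R := intQ phi.

Definition Bphi (phi : sfield) : R :=
  intQ (fun x => eps / 2 * gradsq phi x + / (4 * eps) * ((phi x)^2 - 1)^2).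

Definition Ephi (phi : sfield) : R :=
  k / (2 * eps) * intQ (fun x => (fphi phi x)^2)
  + / 2 * M1 * (Aphi phi - alpha)^2 + / 2 * M2 * (Bphi phi - beta)^2.

Definition dEphi (phi : sfield) : sfield :=
  fun x => k * gphi phi x + M1 * (Aphi phi - alpha) + M2 * (Bphi phi - beta) * fphi phi x.
End Energy.

(* Main.v *)
Require Import Defs.
From Stdlib Require Import Reals List Lra Lia ClassicalEpsilon Classical FunctionalExtensionality.
From Coquelicot Require Import Coquelicot.
Open Scope R_scope.

Lemma ballR (x e y : R) : ball x e y <-> Rabs (y - x) < e.
Proof. reflexivity. Qed.

Lemma param_cont {P : UniformSpace} (H : P -> R -> R) (p0 : P) :
  locally p0 (fun p => forall c, 0 <= c <= 1 ->
     continuous (fun q : P * R => H (fst q) (snd q)) (p, c)) ->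
  continuous (fun p => RInt (H p) 0 1) p0.
Proof.
  intros Hloc.
  assert (Hc0 : forall c, 0 <= c <= 1 -> continuous (fun q : P * R => H (fst q) (snd q)) (p0, c)).
  { intros c Hc. apply locally_singleton in Hloc. auto. }
  apply filterlim_locally. intros eps.
  assert (He4 : 0 < eps / 4) by (destruct eps; simpl; lra).
  set (e4 := mkposreal _ He4).
  assert (Hd : forall c, exists d : posreal, 0 <= c <= 1 ->
     forall q : P * R, ball (p0, c) d q -> Rabs (H (fst q) (snd q) - H p0 c) < e4).
  { intros c. destruct (Rle_dec 0 c) as [h1|h1]; [destruct (Rle_dec c 1) as [h2|h2]|].
    - specialize (Hc0 c (conj h1 h2)). unfold continuous in Hc0. rewrite filterlim_locally in Hc0.
      specialize (Hc0 e4). destruct Hc0 as [d Hd]. exists d. intros _ q Hq.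
      apply Hd in Hq. exact Hq.
    - exists (mkposreal 1 Rlt_0_1). intros []; lra.
    - exists (mkposreal 1 Rlt_0_1). intros []; lra. }
  set (delta := fun c => proj1_sig (constructive_indefinite_description _ (Hd c))).
  assert (Hdelta : forall c, 0 <= c <= 1 -> forall q : P * R, ball (p0, c) (delta c) q ->
        Rabs (H (fst q) (snd q) - H p0 c) < e4).
  { intros c. unfold delta. destruct (constructive_indefinite_description _ (Hd c)). simpl. exact r. }
  destruct (compactness_value_1d 0 1 delta) as [d Hcomp].
  assert (Hloc' := Hloc).
  destruct Hloc' as [r Hr].
  assert (Hmin : 0 < Rmin d r) by (apply Rmin_pos; [destruct d|destruct r]; simpl; auto).
  exists (mkposreal _ Hmin). intros p Hp. simpl in Hp.
  assert (Hpd : ball p0 d p) by (eapply ball_le; [apply Rmin_l|exact Hp]).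
  assert (Hpr : ball p0 r p) by (eapply ball_le; [apply Rmin_r|exact Hp]).
  specialize (Hr p Hpr).
  assert (Hint : forall p', (forall c, 0 <= c <= 1 -> continuous (fun q : P * R => H (fst q) (snd q)) (p', c)) -> ex_RInt (H p') 0 1).
  { intros p' Hp'. apply (ex_RInt_continuous (V:=R_CompleteNormedModule)). intros z Hz.
    rewrite Rmin_left in Hz by lra. rewrite Rmax_right in Hz by lra.
    specialize (Hp' z Hz).
    apply (continuous_comp_2 (fun _ => p') (fun y => y) H).
    apply continuous_const. apply continuous_id. exact Hp'. }
  assert (Hpt : forall x, 0 <= x <= 1 -> Rabs (H p x - H p0 x) <= eps / 2).
  { intros x Hx. specialize (Hcomp x Hx).
    apply NNPP. intro Hn. apply Hcomp. intros [u [Hu [Hxu Hdu]]]. apply Hn.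
    assert (A1 : Rabs (H p x - H p0 u) < e4).
    { apply (Hdelta u Hu (p, x)). split.
      - eapply ball_le; [exact Hdu|exact Hpd].
      - apply ballR. exact Hxu. }
    assert (A2 : Rabs (H p0 x - H p0 u) < e4).
    { apply (Hdelta u Hu (p0, x)). split.
      - apply ball_center.
      - apply ballR. exact Hxu. }
    simpl in A1, A2.
    replace (H p x - H p0 x) with ((H p x - H p0 u) - (H p0 x - H p0 u)) by ring.
    eapply Rle_trans. apply Rabs_triang. rewrite Rabs_Ropp. lra. }
  apply ballR.
  assert (Ep : ex_RInt (H p) 0 1) by (apply Hint; exact Hr).
  assert (Ep0 : ex_RInt (H p0) 0 1) by (apply Hint; exact Hc0).
  assert (Eq : RInt (H p) 0 1 - RInt (H p0) 0 1 = RInt (fun x => H p x - H p0 x) 0 1).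
  { symmetry. apply (RInt_minus (V:=R_CompleteNormedModule)); auto. }
  rewrite Eq.
  eapply Rle_lt_trans.
  apply abs_RInt_le_const with (M := eps/2). lra.
  apply (ex_RInt_minus (V:=R_CompleteNormedModule)); auto.
  exact Hpt.
  destruct eps; simpl; lra.
Qed.
Lemma cont_pair {U V W : UniformSpace} (f : U -> V) (g : U -> W) x :
  continuous f x -> continuous g x -> continuous (fun y => (f y, g y)) x.
Proof.
  intros Hf Hg. apply (continuous_comp_2 f g (fun a b => (a, b))); auto.
  eapply continuous_ext. 2: apply continuous_id.
  intros [a b]; reflexivity.
Qed.

Lemma cont_fst_comp {U V W : UniformSpace} (f : U -> V * W) x :
  continuous f x -> continuous (fun y => fst (f y)) x.
Proof.
  intros Hf. apply (continuous_comp f fst); auto. destruct (f x). apply continuous_fst.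
Qed.

Lemma cont_snd_comp {U V W : UniformSpace} (f : U -> V * W) x :
  continuous f x -> continuous (fun y => snd (f y)) x.
Proof.
  intros Hf. apply (continuous_comp f snd); auto. destruct (f x). apply continuous_snd.
Qed.

Ltac cont_tac := repeat (first [ refine (cont_pair _ _ _ _ _) | refine (cont_fst_comp _ _ _)
   | refine (cont_snd_comp _ _ _) | apply continuous_id | apply continuous_const ]).

Definition JC (G : R -> Pt -> R) (D : R -> Prop) : Prop :=
  forall s x, D s -> continuous (fun p : R * Pt => G (fst p) (snd p)) (s, x).

Definition Dopen (D : R -> Prop) : Prop := forall s, D s -> locally s D.

Definition I1 (G : R -> Pt -> R) s a b := RInt (fun c => G s (a, b, c)) 0 1.
Definition I2 (G : R -> Pt -> R) s a := RInt (fun b => I1 G s a b) 0 1.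

Lemma intQ_I2 G s : intQ (G s) = RInt (I2 G s) 0 1.
Proof. reflexivity. Qed.

Lemma locally_fst {U V : UniformSpace} (D : U -> Prop) (x : U) (y : V) :
  locally x D -> locally (x, y) (fun q => D (fst q)).
Proof.
  intros [e He]. exists e. intros [a b] [H1 H2]. apply He. exact H1.
Qed.

Lemma C1 G D : Dopen D -> JC G D -> forall s a b, D s ->
  continuous (fun q : R * R * R => I1 G (fst (fst q)) (snd (fst q)) (snd q)) (s, a, b).
Proof.
  intros Do HG s a b Ds. unfold I1.
  apply (param_cont (fun q : R * R * R => fun c => G (fst (fst q)) (snd (fst q), snd q, c))).
  eapply filter_imp; [| apply (locally_fst (fun q : R * R => D (fst q)) (s, a) b);
     apply (locally_fst D s a); apply Do; auto].
  intros [[s' a'] b'] Hs c _. simpl in Hs.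
  apply (continuous_comp (fun w : R * R * R * R => (fst (fst (fst w)), (snd (fst (fst w)), snd (fst w), snd w)))
          (fun p : R * Pt => G (fst p) (snd p))).
  cont_tac. simpl. apply HG; auto.
Qed.

Lemma C2 G D : Dopen D -> JC G D -> forall s a, D s ->
  continuous (fun q : R * R => I2 G (fst q) (snd q)) (s, a).
Proof.
  intros Do HG s a Ds. unfold I2.
  apply (param_cont (fun q : R * R => fun b => I1 G (fst q) (snd q) b)).
  eapply filter_imp; [| apply (locally_fst D s a); apply Do; auto].
  intros [s' a'] Hs c _. simpl in Hs.
  apply (C1 G D Do HG s' a' c Hs).
Qed.

Lemma C3 G D : Dopen D -> JC G D -> forall s, D s ->
  continuous (fun z => intQ (G z)) s.
Proof.
  intros Do HG s Ds. unfold intQ.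
  apply (param_cont (fun z => fun a => I2 G z a)).
  eapply filter_imp; [| apply Do; auto].
  intros s' Hs c _. apply (C2 G D Do HG s' c Hs).
Qed.

Lemma cont_slice (H : R -> R -> R) s c :
  continuous (fun q : R * R => H (fst q) (snd q)) (s, c) -> continuous (H s) c.
Proof.
  intros Hc. apply (continuous_comp_2 (fun _ => s) (fun y => y) H).
  apply continuous_const. apply continuous_id. exact Hc.
Qed.

Lemma ex_RInt_cont01 (f : R -> R) : (forall c, 0 <= c <= 1 -> continuous f c) -> ex_RInt f 0 1.
Proof.
  intros Hf. apply (ex_RInt_continuous (V:=R_CompleteNormedModule)). intros z Hz.
  rewrite Rmin_left in Hz by lra. rewrite Rmax_right in Hz by lra. auto.
Qed.

Lemma param_der (K dK : R -> R -> R) D : Dopen D ->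
  (forall s c, D s -> is_derive (fun z => K z c) s (dK s c)) ->
  (forall s c, D s -> continuous (fun q : R * R => K (fst q) (snd q)) (s, c)) ->
  (forall s c, D s -> continuous (fun q : R * R => dK (fst q) (snd q)) (s, c)) ->
  forall s, D s -> is_derive (fun z => RInt (K z) 0 1) s (RInt (dK s) 0 1).
Proof.
  intros Do Hd HK HdK s Ds.
  replace (RInt (dK s) 0 1) with (RInt (fun c => Derive (fun z => K z c) s) 0 1).
  2: { apply RInt_ext. intros x _. apply is_derive_unique. auto. }
  apply (is_derive_RInt_param (fun z c => K z c)).
  - eapply filter_imp; [| apply Do; eauto]. intros x Dx t _. eexists; apply Hd; auto.
  - intros t _. apply continuity_2d_pt_filterlim.
    change (continuous (fun q : R * R => Derive (fun z => K z (snd q)) (fst q)) (s, t)).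
    apply (continuous_ext_loc _ (fun q : R * R => dK (fst q) (snd q))).
    + eapply filter_imp; [| apply (locally_fst D s t); apply Do; auto].
      intros [z c] Hz. simpl in Hz. simpl. symmetry. apply is_derive_unique. auto.
    + apply HdK; auto.
  - eapply filter_imp; [| apply Do; eauto]. intros y Dy.
    apply ex_RInt_cont01. intros c _. apply cont_slice. auto.
Qed.

Definition dG (G : R -> Pt -> R) : R -> Pt -> R := fun s x => Derive (fun z => G z x) s.

Lemma I1_deriv (G : R -> Pt -> R) D : Dopen D -> JC G D ->
  (forall s x, D s -> ex_derive (fun z => G z x) s) -> JC (dG G) D ->
  forall s a b, D s -> is_derive (fun z => I1 G z a b) s (I1 (dG G) s a b).
Proof.
  intros Do HG Hex HdG.
  { intros s a b Ds. unfold I1.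
    apply (param_der (fun z c => G z (a, b, c)) (fun z c => dG G z (a, b, c)) D Do); auto.
    - intros s' c Ds'. apply Derive_correct. auto.
    - intros s' c Ds'.
      apply (continuous_comp (fun w : R * R => (fst w, (a, b, snd w))) (fun p : R * Pt => G (fst p) (snd p))).
      cont_tac. simpl. apply HG; auto.
    - intros s' c Ds'.
      apply (continuous_comp (fun w : R * R => (fst w, (a, b, snd w))) (fun p : R * Pt => dG G (fst p) (snd p))).
      cont_tac. simpl. apply HdG; auto. }
Qed.

Lemma I2_deriv (G : R -> Pt -> R) D : Dopen D -> JC G D ->
  (forall s x, D s -> ex_derive (fun z => G z x) s) -> JC (dG G) D ->
  forall s a, D s -> is_derive (fun z => I2 G z a) s (I2 (dG G) s a).
Proof.
  intros Do HG Hex HdG.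
  assert (L1 := I1_deriv G D Do HG Hex HdG).
  { intros s a Ds. unfold I2.
    apply (param_der (fun z b => I1 G z a b) (fun z b => I1 (dG G) z a b) D Do); auto.
    - intros s' c Ds'.
      apply (continuous_comp (fun w : R * R => (fst w, a, snd w)) (fun q : R * R * R => I1 G (fst (fst q)) (snd (fst q)) (snd q))).
      cont_tac. simpl. apply (C1 G D); auto.
    - intros s' c Ds'.
      apply (continuous_comp (fun w : R * R => (fst w, a, snd w)) (fun q : R * R * R => I1 (dG G) (fst (fst q)) (snd (fst q)) (snd q))).
      cont_tac. simpl. apply (C1 (dG G) D); auto. }
Qed.

Lemma intQ_deriv (G : R -> Pt -> R) D : Dopen D -> JC G D ->
  (forall s x, D s -> ex_derive (fun z => G z x) s) -> JC (dG G) D ->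
  forall s, D s -> is_derive (fun z => intQ (G z)) s (intQ (dG G s)).
Proof.
  intros Do HG Hex HdG.
  assert (L2 := I2_deriv G D Do HG Hex HdG).
  intros s Ds. unfold intQ.
  apply (param_der (fun z a => I2 G z a) (fun z a => I2 (dG G) z a) D Do); auto.
  - intros s' c Ds'. apply (C2 G D); auto.
  - intros s' c Ds'. apply (C2 (dG G) D); auto.
Qed.

Definition SC (g : Pt -> R) : Prop := forall x, continuous g x.

Lemma Dopen_True : Dopen (fun _ => True).
Proof. intros s _. apply filter_true. Qed.

Lemma JC_of_SC g : SC g -> JC (fun _ => g) (fun _ => True).
Proof.
  intros Hg s x _. apply (continuous_comp snd g). apply continuous_snd. apply Hg.
Qed.

Lemma exI0 g a b : SC g -> ex_RInt (fun c => g (a, b, c)) 0 1.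
Proof.
  intros Hg. apply ex_RInt_cont01. intros c _.
  apply (continuous_comp (fun c => (a, b, c)) g). cont_tac. apply Hg.
Qed.

Lemma exI1 g a : SC g -> ex_RInt (fun b => I1 (fun _ => g) 0 a b) 0 1.
Proof.
  intros Hg. apply ex_RInt_cont01. intros c _.
  apply (continuous_comp (fun c => (0, a, c)) (fun q : R * R * R => I1 (fun _ => g) (fst (fst q)) (snd (fst q)) (snd q))).
  cont_tac. apply (C1 _ _ Dopen_True (JC_of_SC g Hg)); auto.
Qed.

Lemma exI2 g : SC g -> ex_RInt (fun a => I2 (fun _ => g) 0 a) 0 1.
Proof.
  intros Hg. apply ex_RInt_cont01. intros c _.
  apply (continuous_comp (fun c => (0, c)) (fun q : R * R => I2 (fun _ => g) (fst q) (snd q))).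
  cont_tac. apply (C2 _ _ Dopen_True (JC_of_SC g Hg)); auto.
Qed.

Lemma intQ_ext f g : (forall x, f x = g x) -> intQ f = intQ g.
Proof. intros H. f_equal. apply functional_extensionality. auto. Qed.

Lemma intQ_plus f g : SC f -> SC g -> intQ (fun x => f x + g x) = intQ f + intQ g.
Proof.
  intros Hf Hg. unfold intQ.
  rewrite <- (RInt_plus (V:=R_CompleteNormedModule)) by (apply (exI2 f Hf) || apply (exI2 g Hg)).
  apply RInt_ext. intros a _.
  rewrite <- (RInt_plus (V:=R_CompleteNormedModule)) by (apply (exI1 f a Hf) || apply (exI1 g a Hg)).
  apply RInt_ext. intros b _.
  rewrite <- (RInt_plus (V:=R_CompleteNormedModule)) by (apply (exI0 f a b Hf) || apply (exI0 g a b Hg)).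
  reflexivity.
Qed.

Lemma intQ_scal f c : SC f -> intQ (fun x => c * f x) = c * intQ f.
Proof.
  intros Hf. unfold intQ.
  rewrite <- (RInt_scal (V:=R_CompleteNormedModule)) by apply (exI2 f Hf).
  apply RInt_ext. intros a _.
  rewrite <- (RInt_scal (V:=R_CompleteNormedModule)) by apply (exI1 f a Hf).
  apply RInt_ext. intros b _.
  rewrite <- (RInt_scal (V:=R_CompleteNormedModule)) by apply (exI0 f a b Hf).
  reflexivity.
Qed.

Lemma SC_const c : SC (fun _ => c).
Proof. intros x. apply continuous_const. Qed.

Lemma intQ_zero : intQ (fun _ => 0) = 0.
Proof.
  rewrite (intQ_ext _ (fun x => 0 * 0)) by (intros; ring).
  rewrite (intQ_scal (fun _ => 0) 0) by apply SC_const. ring.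
Qed.

Lemma SC_plus f g : SC f -> SC g -> SC (fun x => f x + g x).
Proof. intros Hf Hg x. apply (continuous_plus f g); auto. Qed.

Lemma SC_mult f g : SC f -> SC g -> SC (fun x => f x * g x).
Proof. intros Hf Hg x. apply (continuous_mult f g); auto. Qed.

Lemma intQ_opp f : SC f -> intQ (fun x => - f x) = - intQ f.
Proof.
  intros Hf. rewrite (intQ_ext _ (fun x => (-1) * f x)) by (intros; ring).
  rewrite intQ_scal by auto. ring.
Qed.

Lemma intQ_minus f g : SC f -> SC g -> intQ (fun x => f x - g x) = intQ f - intQ g.
Proof.
  intros Hf Hg. rewrite (intQ_ext _ (fun x => f x + (-1) * g x)) by (intros; ring).
  rewrite intQ_plus; auto. rewrite intQ_scal; auto. ring.
  intros x. apply (continuous_mult (fun _ => -1) g); auto. apply continuous_const.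
Qed.

Lemma RInt_zero01 : RInt (fun _ => 0) 0 1 = 0.
Proof. rewrite RInt_const. apply (scal_zero_r (K:=R_Ring) (V:=R_ModuleSpace)). Qed.

Lemma upd_upd i x s z : upd i (upd i x s) z = upd i x z.
Proof. destruct x as [[a b] c]; destruct i as [|[|i]]; reflexivity. Qed.

Lemma coord_upd i x s : coord i (upd i x s) = s.
Proof. destruct x as [[a b] c]; destruct i as [|[|i]]; reflexivity. Qed.

Lemma upd_coord i x : upd i x (coord i x) = x.
Proof. destruct x as [[a b] c]; destruct i as [|[|i]]; reflexivity. Qed.

Lemma cont_upd i (p : R * Pt) : continuous (fun p : R * Pt => upd i (snd p) (fst p)) p.
Proof.
  destruct p as [s [[a b] c]].
  destruct i as [|[|i]].
  - apply (continuous_ext (fun p : R * Pt => (fst p, snd (fst (snd p)), snd (snd p)))).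
    intros [s' [[a' b'] c']]; reflexivity. cont_tac.
  - apply (continuous_ext (fun p : R * Pt => (fst (fst (snd p)), fst p, snd (snd p)))).
    intros [s' [[a' b'] c']]; reflexivity. cont_tac.
  - apply (continuous_ext (fun p : R * Pt => (fst (fst (snd p)), snd (fst (snd p)), fst p))).
    intros [s' [[a' b'] c']]; reflexivity. cont_tac.
Qed.

Definition Gi (v : Pt -> R) (i : nat) : R -> Pt -> R := fun s x => v (upd i x s).

Lemma JC_Gi v i : SC v -> JC (Gi v i) (fun _ => True).
Proof.
  intros Hv s x _. unfold Gi.
  apply (continuous_comp (fun p : R * Pt => upd i (snd p) (fst p)) v). apply cont_upd. apply Hv.
Qed.

Lemma dG_Gi v i s x : dG (Gi v i) s x = pd i v (upd i x s).
Proof.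
  unfold dG, Gi, pd. rewrite coord_upd. apply Derive_ext. intros z. rewrite upd_upd. reflexivity.
Qed.

Lemma ex_Gi v i : (forall y, ex_derive (fun z => v (upd i y z)) (coord i y)) ->
  forall s x, ex_derive (fun z => Gi v i z x) s.
Proof.
  intros H s x. specialize (H (upd i x s)). rewrite coord_upd in H.
  unfold Gi. eapply ex_derive_ext; [| exact H]. intros z. simpl. rewrite upd_upd. reflexivity.
Qed.

Lemma JC_dGi v i : SC (pd i v) -> JC (dG (Gi v i)) (fun _ => True).
Proof.
  intros Hv s x _.
  apply (continuous_ext (fun p : R * Pt => pd i v (upd i (snd p) (fst p)))).
  intros p. symmetry. apply dG_Gi.
  apply (continuous_comp (fun p : R * Pt => upd i (snd p) (fst p)) (pd i v)). apply cont_upd. apply Hv.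
Qed.

Definition exd (i : nat) (v : Pt -> R) : Prop := forall y, ex_derive (fun z => v (upd i y z)) (coord i y).

Lemma per_coord (v : Pt -> R) i x : (i < 3)%nat -> periodic v ->
  v (upd i x 1) = v (upd i x 0).
Proof.
  intros Hi Hv. rewrite <- (Hv i (upd i x 0) Hi). unfold shift1.
  rewrite coord_upd, upd_upd. rewrite Rplus_0_l. reflexivity.
Qed.

Lemma intQ_pd_zero v i : (i < 3)%nat -> SC v -> SC (pd i v) -> exd i v -> periodic v ->
  intQ (pd i v) = 0.
Proof.
  intros Hi Hv Hpv Hex Hper.
  assert (HJ := JC_Gi v i Hv). assert (HJd := JC_dGi v i Hpv). assert (He := ex_Gi v i Hex).
  assert (HeT : forall s x, True -> ex_derive (fun z => Gi v i z x) s) by auto.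
  destruct i as [|[|[|i]]]; [| | | lia].
  -
    assert (D2 := I2_deriv (Gi v 0) _ Dopen_True HJ HeT HJd).
    unfold intQ.
    transitivity (RInt (fun a => I2 (dG (Gi v 0)) a 0) 0 1).
    { apply RInt_ext. intros a _. unfold I2, I1. apply RInt_ext. intros b _. apply RInt_ext. intros c _.
      rewrite dG_Gi. reflexivity. }
    rewrite (is_RInt_unique _ 0 1 (I2 (Gi v 0) 1 0 - I2 (Gi v 0) 0 0)).
    2: { apply (is_RInt_derive (fun z => I2 (Gi v 0) z 0)).
         - intros x _. apply D2. auto.
         - intros x _. apply (continuous_comp (fun z => (z, 0)) (fun q : R * R => I2 (dG (Gi v 0)) (fst q) (snd q))).
           cont_tac. apply (C2 _ _ Dopen_True HJd); auto. }
    unfold I2, I1, Gi. rewrite (RInt_ext (fun b => RInt (fun c => v (upd 0 (0, b, c) 1)) 0 1)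
                                         (fun b => RInt (fun c => v (upd 0 (0, b, c) 0)) 0 1)).
    ring. intros b _. apply RInt_ext. intros c _. apply per_coord; auto.
  -
    assert (D1 := I1_deriv (Gi v 1) _ Dopen_True HJ HeT HJd).
    unfold intQ. transitivity (RInt (fun _ => 0) 0 1); [| apply RInt_zero01]. apply RInt_ext. intros a _.
    transitivity (RInt (fun b => I1 (dG (Gi v 1)) b a 0) 0 1).
    { apply RInt_ext. intros b _. unfold I1. apply RInt_ext. intros c _.
      rewrite dG_Gi. reflexivity. }
    rewrite (is_RInt_unique _ 0 1 (I1 (Gi v 1) 1 a 0 - I1 (Gi v 1) 0 a 0)).
    2: { apply (is_RInt_derive (fun z => I1 (Gi v 1) z a 0)).
         - intros x _. apply D1. auto.
         - intros x _. apply (continuous_comp (fun z => (z, a, 0)) (fun q : R * R * R => I1 (dG (Gi v 1)) (fst (fst q)) (snd (fst q)) (snd q))).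
           cont_tac. apply (C1 _ _ Dopen_True HJd); auto. }
    unfold I1, Gi. rewrite (RInt_ext (fun c => v (upd 1 (a, 0, c) 1))
                                     (fun c => v (upd 1 (a, 0, c) 0))).
    apply Rminus_diag_eq; reflexivity. intros c _. apply per_coord; auto.
  -
    unfold intQ. transitivity (RInt (fun _ => 0) 0 1); [| apply RInt_zero01]. apply RInt_ext. intros a _.
    transitivity (RInt (fun _ => 0) 0 1); [| apply RInt_zero01]. apply RInt_ext. intros b _.
    rewrite (is_RInt_unique _ 0 1 (v (a, b, 1) - v (a, b, 0))).
    + replace (v (a, b, 1)) with (v (upd 2 (a, b, 0) 1)) by reflexivity.
      rewrite per_coord; auto. apply Rminus_diag_eq; reflexivity.
    + apply (is_RInt_derive (fun z => v (a, b, z))).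
      * intros x _. apply Derive_correct. apply (Hex (a, b, x)).
      * intros x _. apply (continuous_comp (fun z => (a, b, z)) (pd 2 v)). cont_tac. apply Hpv.
Qed.

Lemma pd_mult i h w x : exd i h -> exd i w ->
  pd i (fun y => h y * w y) x = pd i h x * w x + h x * pd i w x.
Proof.
  intros Hh Hw. unfold pd.
  rewrite (Derive_mult (fun s => h (upd i x s)) (fun s => w (upd i x s))) by auto.
  rewrite upd_coord. ring.
Qed.

Lemma exd_mult i h w : exd i h -> exd i w -> exd i (fun y => h y * w y).
Proof. intros Hh Hw y. apply (ex_derive_mult (fun s => h (upd i y s)) (fun s => w (upd i y s))); auto. Qed.

Lemma SC_ext f g : (forall x, f x = g x) -> SC f -> SC g.
Proof. intros H Hf x. apply (continuous_ext f g); auto. Qed.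

Lemma IBP i h w : (i < 3)%nat -> SC h -> SC w -> SC (pd i h) -> SC (pd i w) ->
  exd i h -> exd i w -> periodic h -> periodic w ->
  intQ (fun x => h x * pd i w x) = - intQ (fun x => pd i h x * w x).
Proof.
  intros Hi Hh Hw Hph Hpw Eh Ew Ph Pw.
  assert (Z := intQ_pd_zero (fun y => h y * w y) i Hi (SC_mult h w Hh Hw)).
  assert (E : forall x, pd i (fun y => h y * w y) x = pd i h x * w x + h x * pd i w x).
  { intros x. apply pd_mult; auto. }
  rewrite (intQ_ext _ (fun x => pd i h x * w x + h x * pd i w x) E) in Z.
  rewrite (intQ_plus (fun x => pd i h x * w x) (fun x => h x * pd i w x)) in Z.
  - assert (Z' : intQ (fun x => pd i h x * w x) + intQ (fun x => h x * pd i w x) = 0).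
    { apply Z.
      - eapply SC_ext. 2: apply SC_plus; [apply (SC_mult _ _ Hph Hw)|apply (SC_mult _ _ Hh Hpw)].
        intros x. simpl. symmetry. apply E.
      - apply exd_mult; auto.
      - intros j x Hj. rewrite (Ph j x Hj), (Pw j x Hj). reflexivity. }
    lra.
  - apply SC_mult; auto.
  - apply SC_mult; auto.
Qed.

Inductive ex : Type :=
| EB (F : tfield) (l : list nat)
| EC (r : R)
| EA (e1 e2 : ex)
| EM (e1 e2 : ex).

Fixpoint ev (e : ex) : tfield :=
  match e with
  | EB F l => iterD l F
  | EC r => fun _ _ => r
  | EA e1 e2 => fun t x => ev e1 t x + ev e2 t x
  | EM e1 e2 => fun t x => ev e1 t x * ev e2 t x
  end.

Fixpoint dx (d : nat) (e : ex) : ex :=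
  match e with
  | EB F l => EB F (d :: l)
  | EC _ => EC 0
  | EA e1 e2 => EA (dx d e1) (dx d e2)
  | EM e1 e2 => EA (EM (dx d e1) e2) (EM e1 (dx d e2))
  end.

Fixpoint OK (e : ex) : Prop :=
  match e with
  | EB F l => smooth_pos F /\ (forall t, 0 <= t -> periodic (F t))
  | EC _ => True
  | EA e1 e2 => OK e1 /\ OK e2
  | EM e1 e2 => OK e1 /\ OK e2
  end.

Lemma OK_dx d e : OK e -> OK (dx d e).
Proof. induction e; simpl; tauto. Qed.

Definition lineF (d : nat) (F : tfield) (t : R) (x : Pt) : R -> R :=
  match d with 0%nat => fun s => F s x | S i => fun s => F t (upd i x s) end.
Definition lp (d : nat) (t : R) (x : Pt) : R :=
  match d with 0%nat => t | S i => coord i x end.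

Lemma Dir_line d F t x : Dir d F t x = Derive (lineF d F t x) (lp d t x).
Proof. destruct d; reflexivity. Qed.

Lemma KL e : OK e -> forall t x, 0 < t ->
  continuous (fun p : R * Pt => ev e (fst p) (snd p)) (t, x) /\
  forall d, (d < 4)%nat -> ex_derive (lineF d (ev e) t x) (lp d t x) /\
     Dir d (ev e) t x = ev (dx d e) t x.
Proof.
  induction e as [F l|r|e1 IH1 e2 IH2|e1 IH1 e2 IH2]; intros Hok t x Ht.
  - destruct Hok as [HF _]. destruct (HF l t x Ht) as [H1 [H2 H3]]. split; [exact H3|].
    intros d Hd. split; [|reflexivity].
    destruct d as [|i]; simpl; auto. apply H2. lia.
  - split. apply continuous_const. intros d Hd. split.
    + destruct d; apply ex_derive_const.
    + rewrite Dir_line. destruct d; simpl; apply Derive_const.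
  - destruct Hok as [Ok1 Ok2].
    destruct (IH1 Ok1 t x Ht) as [C1' D1']. destruct (IH2 Ok2 t x Ht) as [C2' D2'].
    split.
    + apply (continuous_plus (fun p : R * Pt => ev e1 (fst p) (snd p)) (fun p : R * Pt => ev e2 (fst p) (snd p))); auto.
    + intros d Hd. destruct (D1' d Hd) as [E1 F1]. destruct (D2' d Hd) as [E2 F2].
      assert (Hl : lineF d (ev (EA e1 e2)) t x = fun s => lineF d (ev e1) t x s + lineF d (ev e2) t x s)
        by (destruct d; reflexivity).
      split.
      * rewrite Hl. apply (ex_derive_plus (lineF d (ev e1) t x) (lineF d (ev e2) t x)); auto.
      * rewrite Dir_line, Hl. rewrite Derive_plus by auto.
        rewrite <- !Dir_line. rewrite F1, F2. reflexivity.
  - destruct Hok as [Ok1 Ok2].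
    destruct (IH1 Ok1 t x Ht) as [C1' D1']. destruct (IH2 Ok2 t x Ht) as [C2' D2'].
    split.
    + apply (continuous_mult (fun p : R * Pt => ev e1 (fst p) (snd p)) (fun p : R * Pt => ev e2 (fst p) (snd p))); auto.
    + intros d Hd. destruct (D1' d Hd) as [E1 F1]. destruct (D2' d Hd) as [E2 F2].
      assert (Hl : lineF d (ev (EM e1 e2)) t x = fun s => lineF d (ev e1) t x s * lineF d (ev e2) t x s)
        by (destruct d; reflexivity).
      assert (Hp : forall e, lineF d (ev e) t x (lp d t x) = ev e t x).
      { intros e. destruct d; simpl; [reflexivity|]. rewrite upd_coord. reflexivity. }
      split.
      * rewrite Hl. apply (ex_derive_mult (lineF d (ev e1) t x) (lineF d (ev e2) t x)); auto.
      * rewrite Dir_line, Hl. rewrite Derive_mult by auto.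
        rewrite <- !Dir_line. rewrite F1, F2, !Hp. reflexivity.
Qed.


Lemma loc_pos t : 0 < t -> locally t (fun s => 0 < s).
Proof.
  intros Ht. exists (mkposreal t Ht). intros y Hy. change (Rabs (y - t) < t) in Hy.
  apply Rabs_def2 in Hy. lra.
Qed.

Lemma Derive_per (f : R -> R) a : (forall s, f (s + 1) = f s) -> Derive f (a + 1) = Derive f a.
Proof.
  intros Hf. unfold Derive. f_equal. apply Lim_ext. intros h.
  replace (a + 1 + h) with ((a + h) + 1) by ring. rewrite !Hf. reflexivity.
Qed.

Lemma pd_periodic g i : periodic g -> periodic (pd i g).
Proof.
  intros Hg j x Hj. destruct x as [[a b] c].
  destruct j as [|[|[|j]]]; try lia; destruct i as [|[|i]]; unfold pd, shift1; simpl.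
  - apply Derive_per. intros s. apply (Hg 0%nat (s, b, c)). lia.
  - apply Derive_ext. intros s. apply (Hg 0%nat (a, s, c)). lia.
  - apply Derive_ext. intros s. apply (Hg 0%nat (a, b, s)). lia.
  - apply Derive_ext. intros s. apply (Hg 1%nat (s, b, c)). lia.
  - apply Derive_per. intros s. apply (Hg 1%nat (a, s, c)). lia.
  - apply Derive_ext. intros s. apply (Hg 1%nat (a, b, s)). lia.
  - apply Derive_ext. intros s. apply (Hg 2%nat (s, b, c)). lia.
  - apply Derive_ext. intros s. apply (Hg 2%nat (a, s, c)). lia.
  - apply Derive_per. intros s. apply (Hg 2%nat (a, b, s)). lia.
Qed.

Lemma per_iterD F l : (forall t, 0 <= t -> periodic (F t)) -> forall t, 0 < t -> periodic (iterD l F t).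
Proof.
  intros HF. induction l as [|d l IH]; intros t Ht.
  - apply HF. lra.
  - destruct d as [|i]; simpl.
    + intros j x Hj. unfold dt. apply Derive_ext_loc.
      eapply filter_imp; [| apply loc_pos; exact Ht]. intros s Hs. simpl. apply IH; auto.
    + apply pd_periodic. apply IH; auto.
Qed.

Lemma per_ev e : OK e -> forall t, 0 < t -> periodic (ev e t).
Proof.
  induction e as [F l|r|e1 IH1 e2 IH2|e1 IH1 e2 IH2]; intros Hok t Ht; simpl in *.
  - apply per_iterD; tauto.
  - intros j x _. reflexivity.
  - intros j x Hj. destruct Hok. rewrite (IH1 H t Ht j x Hj), (IH2 H0 t Ht j x Hj). reflexivity.
  - intros j x Hj. destruct Hok. rewrite (IH1 H t Ht j x Hj), (IH2 H0 t Ht j x Hj). reflexivity.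
Qed.

Lemma SC_ev e t : OK e -> 0 < t -> SC (ev e t).
Proof.
  intros Hok Ht x. destruct (KL e Hok t x Ht) as [C _].
  apply (continuous_comp (fun y : Pt => (t, y)) (fun p : R * Pt => ev e (fst p) (snd p))); auto.
  cont_tac.
Qed.

Lemma exd_ev e t i : OK e -> 0 < t -> (i < 3)%nat -> exd i (ev e t).
Proof.
  intros Hok Ht Hi y. destruct (KL e Hok t y Ht) as [_ D]. destruct (D (S i)) as [E _]. lia. exact E.
Qed.

Lemma pd_ev e t i : OK e -> 0 < t -> (i < 3)%nat -> pd i (ev e t) = ev (dx (S i) e) t.
Proof.
  intros Hok Ht Hi. apply functional_extensionality. intros y.
  destruct (KL e Hok t y Ht) as [_ D]. destruct (D (S i)) as [_ E]. lia. exact E.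
Qed.

Lemma intQ_Add e1 e2 t : OK e1 -> OK e2 -> 0 < t ->
  intQ (ev (EA e1 e2) t) = intQ (ev e1 t) + intQ (ev e2 t).
Proof. intros. change (intQ (fun x => ev e1 t x + ev e2 t x) = intQ (ev e1 t) + intQ (ev e2 t)).
  apply (intQ_plus (ev e1 t) (ev e2 t)); apply SC_ev; auto. Qed.

Lemma intQ_Cmul c e t : OK e -> 0 < t -> intQ (ev (EM (EC c) e) t) = c * intQ (ev e t).
Proof. intros. change (intQ (fun x => c * ev e t x) = c * intQ (ev e t)).
  apply (intQ_scal (ev e t) c). apply SC_ev; auto. Qed.

Lemma intQ_evext e1 e2 t : (forall x, ev e1 t x = ev e2 t x) -> intQ (ev e1 t) = intQ (ev e2 t).
Proof. apply intQ_ext. Qed.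

Lemma IBP_ev h w t i : OK h -> OK w -> 0 < t -> (i < 3)%nat ->
  intQ (ev (EM h (dx (S i) w)) t) = - intQ (ev (EM (dx (S i) h) w) t).
Proof.
  intros Hh Hw Ht Hi. simpl.
  rewrite <- (pd_ev w t i), <- (pd_ev h t i); auto.
  apply IBP; auto using SC_ev, exd_ev, per_ev.
  rewrite pd_ev; auto. apply SC_ev; auto. apply OK_dx; auto.
  rewrite pd_ev; auto. apply SC_ev; auto. apply OK_dx; auto.
Qed.

Lemma deriv_ev e t : OK e -> 0 < t ->
  is_derive (fun s => intQ (ev e s)) t (intQ (ev (dx 0 e) t)).
Proof.
  intros Hok Ht.
  replace (intQ (ev (dx 0 e) t)) with (intQ (dG (ev e) t)).
  - apply (intQ_deriv (ev e) (fun s => 0 < s)); auto.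
    + intros s Hs. apply loc_pos; auto.
    + intros s x Hs. apply (KL e Hok s x Hs).
    + intros s x Hs. destruct (KL e Hok s x Hs) as [_ D]. destruct (D 0%nat) as [E _]. lia. exact E.
    + intros s x Hs.
      apply (continuous_ext_loc _ (fun p : R * Pt => ev (dx 0 e) (fst p) (snd p))).
      * eapply filter_imp; [| apply (locally_fst (fun s => 0 < s) s x); apply loc_pos; auto].
        intros [s' x'] Hs'. simpl in Hs'. simpl.
        destruct (KL e Hok s' x' Hs') as [_ D]. destruct (D 0%nat) as [_ E]. lia.
        rewrite <- E. reflexivity.
      * apply (KL (dx 0 e) (OK_dx 0 e Hok) s x Hs).
  - apply intQ_ext. intros y. destruct (KL e Hok t y Ht) as [_ D]. destruct (D 0%nat) as [_ E]. lia.
    rewrite <- E. reflexivity.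
Qed.


Lemma pd_upd g i x v : pd i g (upd i x v) = Derive (fun w => g (upd i x w)) v.
Proof. unfold pd. rewrite coord_upd. apply Derive_ext. intros w. rewrite upd_upd. reflexivity. Qed.

Lemma sm_time F l s y : smooth_pos F -> 0 < s -> ex_derive (fun z => iterD l F z y) s.
Proof. intros HF Hs. apply (HF l s y Hs). Qed.

Lemma sm_space F l s i x v : smooth_pos F -> 0 < s -> (i < 3)%nat ->
  ex_derive (fun z => iterD l F s (upd i x z)) v.
Proof.
  intros HF Hs Hi. destruct (HF l s (upd i x v) Hs) as [_ [H2 _]].
  specialize (H2 i Hi). rewrite coord_upd in H2.
  eapply ex_derive_ext; [| exact H2]. intros z. simpl. rewrite upd_upd. reflexivity.
Qed.

Lemma cont2 F L i x t y : smooth_pos F -> 0 < t ->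
  continuity_2d_pt (fun u v => iterD L F u (upd i x v)) t y.
Proof.
  intros HF Ht. apply continuity_2d_pt_filterlim.
  change (continuous (fun q : R * R => iterD L F (fst q) (upd i x (snd q))) (t, y)).
  destruct (HF L t (upd i x y) Ht) as [_ [_ C]].
  apply (continuous_comp (fun q : R * R => (fst q, upd i x (snd q))) (fun p : R * Pt => iterD L F (fst p) (snd p))).
  - refine (cont_pair _ _ _ _ _).
    + refine (cont_fst_comp _ _ _). apply continuous_id.
    + apply (continuous_comp (fun q : R * R => (snd q, x)) (fun p : R * Pt => upd i (snd p) (fst p))).
      cont_tac. apply cont_upd.
  - exact C.
Qed.

Lemma swap0 F l i t x : smooth_pos F -> (i < 3)%nat -> 0 < t ->
  iterD (0%nat :: S i :: l) F t x = iterD (S i :: 0%nat :: l) F t x.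
Proof.
  intros HF Hi Ht.
  assert (Sch := Schwarz (fun u v => iterD l F u (upd i x v)) t (coord i x)).
  assert (E1 : forall z v, Derive (fun w => iterD l F z (upd i x w)) v = iterD (S i :: l) F z (upd i x v)).
  { intros z v. simpl. rewrite pd_upd. reflexivity. }
  assert (E2 : (fun u v => Derive (fun z => Derive (fun w => iterD l F z (upd i x w)) v) u)
             = (fun u v => iterD (0%nat :: S i :: l) F u (upd i x v))).
  { apply functional_extensionality; intros u. apply functional_extensionality; intros v.
    simpl. unfold dt. apply Derive_ext. intros z. rewrite E1. reflexivity. }
  assert (E3 : (fun u v => Derive (fun z => Derive (fun w => iterD l F w (upd i x z)) u) v)
             = (fun u v => iterD (S i :: 0%nat :: l) F u (upd i x v))).
  { apply functional_extensionality; intros u. apply functional_extensionality; intros v.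
    simpl. rewrite pd_upd. reflexivity. }
  change (Derive (fun z => Derive (fun w => iterD l F z (upd i x w)) (coord i x)) t =
          Derive (fun z => Derive (fun w => iterD l F w (upd i x z)) t) (coord i x)).
  apply Sch.
  - exists (mkposreal t Ht). intros u v Hu _. simpl in Hu.
    assert (Hu0 : 0 < u) by (apply Rabs_def2 in Hu; lra).
    split; [|split; [|split]].
    + apply sm_time; auto.
    + apply sm_space; auto.
    + eapply ex_derive_ext; [| apply (sm_time F (S i :: l) u (upd i x v)); auto].
      intros z. simpl. rewrite E1. reflexivity.
    + apply (sm_space F (0%nat :: l)); auto.
  - cbv beta. rewrite E2. apply cont2; auto.
  - cbv beta. rewrite E3. apply cont2; auto.
Qed.

Lemma iterD_cong d l1 l2 F t x : 0 < t ->
  (forall s y, 0 < s -> iterD l1 F s y = iterD l2 F s y) ->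
  iterD (d :: l1) F t x = iterD (d :: l2) F t x.
Proof.
  intros Ht H. destruct d as [|i]; simpl.
  - unfold dt. apply Derive_ext_loc. eapply filter_imp; [| apply loc_pos; exact Ht].
    intros s Hs. apply H; auto.
  - unfold pd. apply Derive_ext. intros s. apply H; auto.
Qed.

Lemma comm1 F i t x : smooth_pos F -> (i < 3)%nat -> 0 < t ->
  iterD (0%nat :: S i :: nil) F t x = iterD (S i :: 0%nat :: nil) F t x.
Proof. intros. apply swap0; auto. Qed.

Lemma comm2 F i t x : smooth_pos F -> (i < 3)%nat -> 0 < t ->
  iterD (0%nat :: S i :: S i :: nil) F t x = iterD (S i :: S i :: 0%nat :: nil) F t x.
Proof.
  intros HF Hi Ht. rewrite swap0 by auto. apply iterD_cong; auto.
  intros s y Hs. apply comm1; auto.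
Qed.

Definition sum3e (f : nat -> ex) : ex := EA (EA (f 0%nat) (f 1%nat)) (f 2%nat).

Lemma intQ_sum3e f t : (forall i, (i < 3)%nat -> OK (f i)) -> 0 < t ->
  intQ (ev (sum3e f) t) = sum3 (fun i => intQ (ev (f i) t)).
Proof.
  intros Hf Ht. unfold sum3e, sum3.
  rewrite intQ_Add, intQ_Add; auto; try (apply Hf; lia). simpl. split; apply Hf; lia.
Qed.

Lemma ev_sum3e f t x : ev (sum3e f) t x = sum3 (fun i => ev (f i) t x).
Proof. reflexivity. Qed.

Lemma isd_plus (f g : R -> R) (t a b : R) : is_derive f t a -> is_derive g t b ->
  is_derive (fun s => f s + g s) t (a + b).
Proof. intros. apply (is_derive_plus f g); auto. Qed.

Lemma isd_scal (f : R -> R) (t a c : R) : is_derive f t a -> is_derive (fun s => c * f s) t (c * a).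
Proof. intros. apply (is_derive_scal f); auto. Qed.

Lemma isd_minc (f : R -> R) (t a c : R) : is_derive f t a -> is_derive (fun s => f s - c) t a.
Proof.
  intros H. assert (H2 := is_derive_minus f (fun _ => c) t a 0 H (is_derive_const c t)).
  unfold minus, plus, opp in H2; simpl in H2.
  replace (a + - 0) with a in H2 by ring. exact H2.
Qed.

Lemma isd_sqc (f : R -> R) (t a c : R) : is_derive f t a -> is_derive (fun s => (f s - c)^2) t (2 * (f t - c) * a).
Proof.
  intros H.
  apply (is_derive_ext (fun s => (f s - c) * (f s - c))). intros s. simpl. ring.
  replace (2 * (f t - c) * a) with (a * (f t - c) + (f t - c) * a) by ring.
  apply (is_derive_mult (fun s => f s - c) (fun s => f s - c)).
  - apply isd_minc; auto.
  - apply isd_minc; auto.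
  - intros; apply Rmult_comm.
Qed.


Definition Ph F := EB F nil.
Definition psi F := EB F (0%nat :: nil).
Definition lapE F := sum3e (fun i => EB F (S i :: S i :: nil)).
Definition ef eps F := EA (EM (EC (-eps)) (lapE F)) (EM (EM (EC (/eps)) (EA (EM (Ph F) (Ph F)) (EC (-1)))) (Ph F)).
Definition eB eps F := EA (EM (EC (eps/2)) (sum3e (fun i => EM (EB F (S i :: nil)) (EB F (S i :: nil)))))
   (EM (EC (/(4*eps))) (EM (EA (EM (Ph F) (Ph F)) (EC (-1))) (EA (EM (Ph F) (Ph F)) (EC (-1))))).
Definition eg eps F := EA (EM (EC (-1)) (sum3e (fun i => dx (S i) (dx (S i) (ef eps F)))))
   (EM (EM (EC (/eps^2)) (EA (EM (EC 3) (EM (Ph F) (Ph F))) (EC (-1)))) (ef eps F)).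
Definition eE k eps c1 c2 F := EA (EA (EM (EC k) (eg eps F)) (EC c1)) (EM (EC c2) (ef eps F)).

Ltac okt HOK := repeat (first [exact (HOK nil) | apply OK_dx | split
   | progress cbn [OK ef eB eg eE lapE sum3e Ph psi dx] | assumption]).

Lemma ef_bridge eps F s x : ev (ef eps F) s x = fphi eps (F s) x.
Proof. unfold ef, fphi, lap, sum3, lapE, sum3e, Ph. cbn [ev iterD fold_right Dir]. ring. Qed.

Lemma fsq_bridge eps F s : intQ (fun x => (fphi eps (F s) x)^2) = intQ (ev (EM (ef eps F) (ef eps F)) s).
Proof. apply intQ_ext. intros x. cbn [ev]. rewrite ef_bridge. ring. Qed.

Lemma B_bridge eps F s : Bphi eps (F s) = intQ (ev (eB eps F) s).
Proof.
  unfold Bphi. apply intQ_ext. intros x. unfold eB, gradsq, sum3, sum3e, Ph. cbn [ev iterD fold_right Dir]. ring.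
Qed.

Lemma eg_bridge eps F t x : (forall l, OK (EB F l)) -> 0 < t ->
  ev (eg eps F) t x = gphi eps (F t) x.
Proof.
  intros HOK Ht.
  assert (Hf : fphi eps (F t) = ev (ef eps F) t).
  { apply functional_extensionality. intros y. symmetry. apply ef_bridge. }
  assert (Hok : OK (ef eps F)) by okt HOK.
  unfold gphi, lap, sum3. rewrite Hf.
  rewrite !(pd_ev (ef eps F)) by (auto; lia).
  rewrite !(pd_ev (dx _ (ef eps F))) by (auto using OK_dx; lia).
  unfold eg, sum3e, Ph. cbn [ev iterD fold_right]. ring.
Qed.

Lemma eE_bridge k eps M1 M2 alpha beta F t x : (forall l, OK (EB F l)) -> 0 < t ->
  ev (eE k eps (M1 * (Aphi (F t) - alpha)) (M2 * (Bphi eps (F t) - beta)) F) t x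
  = dEphi k eps M1 M2 alpha beta (F t) x.
Proof.
  intros HOK Ht. unfold eE, dEphi. cbn [ev]. rewrite eg_bridge by auto. rewrite ef_bridge. ring.
Qed.


Lemma IBP2 h w t i : OK h -> OK w -> 0 < t -> (i < 3)%nat ->
  intQ (ev (EM h (dx (S i) (dx (S i) w))) t) = intQ (ev (EM (dx (S i) (dx (S i) h)) w) t).
Proof.
  intros Hh Hw Ht Hi.
  rewrite IBP_ev; auto using OK_dx.
  rewrite (IBP_ev (dx (S i) h) w); auto using OK_dx. ring.
Qed.

Section En.
Variables (F : tfield) (eps : R) (t : R).
Hypothesis HOK : forall l, OK (EB F l).
Hypothesis HF : smooth_pos F.
Hypothesis Ht : 0 < t.
Hypothesis Heps : 0 < eps.

Let Pi i := intQ (ev (EM (dx (S i) (dx (S i) (ef eps F))) (psi F)) t).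
Let Qq := intQ (ev (EM (EM (EA (EM (EC 3) (EM (Ph F) (Ph F))) (EC (-1))) (ef eps F)) (psi F)) t).
Let Ri i := intQ (ev (EM (dx (S i) (dx (S i) (Ph F))) (psi F)) t).
Let Ss := intQ (ev (EM (EM (EA (EM (Ph F) (Ph F)) (EC (-1))) (Ph F)) (psi F)) t).

Lemma dF_eq : intQ (ev (dx 0 (EM (ef eps F) (ef eps F))) t) = 2 * (- eps * sum3 Pi + / eps * Qq).
Proof.
  rewrite (intQ_evext _ (EM (EC 2) (EA (EM (EC (-eps)) (sum3e (fun i => EM (ef eps F) (dx (S i) (dx (S i) (psi F))))))
                                    (EM (EC (/eps)) (EM (EM (EA (EM (EC 3) (EM (Ph F) (Ph F))) (EC (-1))) (ef eps F)) (psi F)))))).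
  2: { intros x. unfold ef, lapE, sum3e, Ph, psi. cbn [ev dx].
       rewrite !(comm2 F) by (auto; lia). ring. }
  rewrite intQ_Cmul by (okt HOK).
  rewrite intQ_Add by (okt HOK).
  rewrite !intQ_Cmul by (okt HOK).
  rewrite intQ_sum3e by (intros; okt HOK).
  unfold sum3, Pi, Qq. rewrite !IBP2 by (okt HOK; lia). reflexivity.
Qed.

Lemma dB_eq : intQ (ev (dx 0 (eB eps F)) t) = eps * (- sum3 Ri) + / eps * Ss.
Proof.
  rewrite (intQ_evext _ (EA (EM (EC eps) (sum3e (fun i => EM (dx (S i) (Ph F)) (dx (S i) (psi F)))))
           (EM (EC (/eps)) (EM (EM (EA (EM (Ph F) (Ph F)) (EC (-1))) (Ph F)) (psi F))))).
  2: { intros x. unfold eB, sum3e, Ph, psi. cbn [ev dx].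
       rewrite !(comm1 F) by (auto; lia). field. lra. }
  rewrite intQ_Add by (okt HOK).
  rewrite !intQ_Cmul by (okt HOK).
  rewrite intQ_sum3e by (intros; okt HOK).
  unfold sum3, Ri, Ss.
  rewrite (IBP_ev (dx 1 (Ph F)) (psi F) t 0), (IBP_ev (dx 2 (Ph F)) (psi F) t 1),
          (IBP_ev (dx 3 (Ph F)) (psi F) t 2) by (okt HOK; lia).
  ring.
Qed.

Lemma efpsi_eq : intQ (ev (EM (ef eps F) (psi F)) t) = - eps * sum3 Ri + / eps * Ss.
Proof.
  rewrite (intQ_evext _ (EA (EM (EC (-eps)) (sum3e (fun i => EM (dx (S i) (dx (S i) (Ph F))) (psi F))))
           (EM (EC (/eps)) (EM (EM (EA (EM (Ph F) (Ph F)) (EC (-1))) (Ph F)) (psi F))))).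
  2: { intros x. unfold ef, lapE, sum3e, Ph, psi. cbn [ev dx]. ring. }
  rewrite intQ_Add by (okt HOK).
  rewrite !intQ_Cmul by (okt HOK).
  rewrite intQ_sum3e by (intros; okt HOK).
  reflexivity.
Qed.

Lemma egpsi_eq : intQ (ev (EM (eg eps F) (psi F)) t) = - sum3 Pi + / eps ^ 2 * Qq.
Proof.
  rewrite (intQ_evext _ (EA (EM (EC (-1)) (sum3e (fun i => EM (dx (S i) (dx (S i) (ef eps F))) (psi F))))
           (EM (EC (/eps^2)) (EM (EM (EA (EM (EC 3) (EM (Ph F) (Ph F))) (EC (-1))) (ef eps F)) (psi F))))).
  2: { intros x. unfold eg, sum3e. cbn [ev]. ring. }
  rewrite intQ_Add by (okt HOK).
  rewrite !intQ_Cmul by (okt HOK).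
  rewrite intQ_sum3e by (intros; okt HOK).
  unfold sum3, Pi, Qq. lra.
Qed.

Lemma eEpsi_eq k c1 c2 : intQ (ev (EM (eE k eps c1 c2 F) (psi F)) t) =
  k * intQ (ev (EM (eg eps F) (psi F)) t) + c1 * intQ (ev (psi F) t) + c2 * intQ (ev (EM (ef eps F) (psi F)) t).
Proof.
  rewrite (intQ_evext _ (EA (EA (EM (EC k) (EM (eg eps F) (psi F))) (EM (EC c1) (psi F))) (EM (EC c2) (EM (ef eps F) (psi F))))).
  2: { intros x. unfold eE. cbn [ev]. ring. }
  rewrite !intQ_Add by (okt HOK).
  rewrite !intQ_Cmul by (okt HOK).
  reflexivity.
Qed.

Lemma energy_deriv k M1 M2 alpha beta :
  is_derive (fun s => Ephi k eps M1 M2 alpha beta (F s)) t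
    (intQ (ev (EM (eE k eps (M1 * (Aphi (F t) - alpha)) (M2 * (Bphi eps (F t) - beta)) F) (psi F)) t)).
Proof.
  apply (is_derive_ext (fun s => k / (2 * eps) * intQ (ev (EM (ef eps F) (ef eps F)) s)
      + / 2 * M1 * (intQ (ev (Ph F) s) - alpha) ^ 2 + / 2 * M2 * (intQ (ev (eB eps F) s) - beta) ^ 2)).
  { intros s. unfold Ephi. rewrite fsq_bridge, B_bridge. reflexivity. }
  assert (D1 := deriv_ev (EM (ef eps F) (ef eps F)) t ltac:(okt HOK) Ht).
  assert (D2 := deriv_ev (Ph F) t ltac:(okt HOK) Ht).
  assert (D3 := deriv_ev (eB eps F) t ltac:(okt HOK) Ht).
  assert (D := isd_plus _ _ t _ _ (isd_plus _ _ t _ _ (isd_scal _ t _ (k / (2 * eps)) D1)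
                 (isd_scal _ t _ (/ 2 * M1) (isd_sqc _ t _ alpha D2)))
                 (isd_scal _ t _ (/ 2 * M2) (isd_sqc _ t _ beta D3))).
  cbv beta in D.
  match type of D with is_derive _ _ ?v =>
    replace (intQ (ev (EM (eE k eps (M1 * (Aphi (F t) - alpha)) (M2 * (Bphi eps (F t) - beta)) F) (psi F)) t)) with v
  end.
  exact D.
  rewrite dF_eq, dB_eq, eEpsi_eq, egpsi_eq, efpsi_eq.
  change (intQ (ev (dx 0 (Ph F)) t)) with (intQ (ev (psi F) t)).
  rewrite <- B_bridge. change (intQ (ev (Ph F) t)) with (Aphi (F t)).
  unfold sum3. field. lra.
Qed.
End En.


Definition Ui (u : nat -> tfield) i := EB (u i) nil.

Lemma intQ_EC0 t : intQ (ev (EC 0) t) = 0.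
Proof. apply intQ_zero. Qed.

Section Kin.
Variables (u : nat -> tfield) (P : tfield) (t : R).
Hypothesis HOKu : forall i l, (i < 3)%nat -> OK (EB (u i) l).
Hypothesis HOKP : forall l, OK (EB P l).
Hypothesis Ht : 0 < t.
Hypothesis Hdiv : forall x, sum3 (fun j => pd j (u j t) x) = 0.

Ltac oku := repeat (first [ match goal with
     | |- OK (EB P _) => exact (HOKP _)
     | |- OK (EB (u _) _) => apply HOKu; lia
     | |- OK (Ui u _) => apply HOKu; lia
     | |- OK (dx _ _) => apply OK_dx
     | |- OK (EM _ _) => split
     | |- OK (EA _ _) => split
     | |- OK (sum3e _) => unfold sum3e
     | |- (_ < _)%nat => lia
     | |- 0 < t => exact Ht
     end ]).

Definition X i j := intQ (ev (EM (EM (Ui u i) (Ui u j)) (dx (S j) (Ui u i))) t).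
Definition Y i j := intQ (ev (EM (EM (Ui u i) (Ui u i)) (dx (S j) (Ui u j))) t).

Lemma XY i j : (i < 3)%nat -> (j < 3)%nat -> X i j = - X i j - Y i j.
Proof.
  intros Hi Hj. unfold X at 1. rewrite IBP_ev by oku.
  rewrite (intQ_evext _ (EA (EM (EM (Ui u i) (Ui u j)) (dx (S j) (Ui u i))) (EM (EM (Ui u i) (Ui u i)) (dx (S j) (Ui u j))))).
  2: { intros x. cbn [ev dx]. ring. }
  rewrite intQ_Add by oku. unfold X, Y. ring.
Qed.

Lemma Ysum i : (i < 3)%nat -> sum3 (fun j => Y i j) = 0.
Proof.
  intros Hi. unfold Y. rewrite <- intQ_sum3e by (intros; oku).
  rewrite (intQ_evext _ (EC 0)). apply intQ_EC0.
  intros x. unfold sum3e, Ui. cbn [ev dx iterD fold_right Dir].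
  specialize (Hdiv x). unfold sum3 in Hdiv. 
  transitivity (u i t x * u i t x * (pd 0 (u 0%nat t) x + pd 1 (u 1%nat t) x + pd 2 (u 2%nat t) x)).
  ring. rewrite Hdiv. ring.
Qed.

Lemma conv_zero : sum3 (fun i => sum3 (fun j => X i j)) = 0.
Proof.
  assert (H : forall i j, (i < 3)%nat -> (j < 3)%nat -> X i j = - / 2 * Y i j).
  { intros i j Hi Hj. assert (E := XY i j Hi Hj). lra. }
  assert (Y0 := Ysum 0 ltac:(lia)). assert (Y1 := Ysum 1 ltac:(lia)). assert (Y2 := Ysum 2 ltac:(lia)).
  unfold sum3 in *.
  rewrite (H 0%nat 0%nat), (H 0%nat 1%nat), (H 0%nat 2%nat), (H 1%nat 0%nat), (H 1%nat 1%nat), (H 1%nat 2%nat), (H 2%nat 0%nat), (H 2%nat 1%nat), (H 2%nat 2%nat) by lia.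
  lra.
Qed.

Lemma pres_zero : sum3 (fun i => intQ (ev (EM (Ui u i) (dx (S i) (EB P nil))) t)) = 0.
Proof.
  unfold sum3.
  rewrite (IBP_ev (Ui u 0) (EB P nil) t 0), (IBP_ev (Ui u 1) (EB P nil) t 1), (IBP_ev (Ui u 2) (EB P nil) t 2) by oku.
  assert (E : intQ (ev (sum3e (fun i => EM (dx (S i) (Ui u i)) (EB P nil))) t) = 0).
  { rewrite (intQ_evext _ (EC 0)). apply intQ_EC0.
    intros x. unfold sum3e, Ui. cbn [ev dx iterD fold_right Dir].
    specialize (Hdiv x). unfold sum3 in Hdiv.
    transitivity ((pd 0 (u 0%nat t) x + pd 1 (u 1%nat t) x + pd 2 (u 2%nat t) x) * P t x).
    ring. rewrite Hdiv. ring. }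
  rewrite intQ_sum3e in E by (intros; oku). unfold sum3 in E. lra.
Qed.

Lemma visc_eq i j : (i < 3)%nat -> (j < 3)%nat ->
  intQ (ev (EM (Ui u i) (dx (S j) (dx (S j) (Ui u i)))) t) =
  - intQ (ev (EM (dx (S j) (Ui u i)) (dx (S j) (Ui u i))) t).
Proof. intros. apply IBP_ev; oku. Qed.
End Kin.


Lemma sum3_ext (a b : nat -> R) : (forall i, (i < 3)%nat -> a i = b i) -> sum3 a = sum3 b.
Proof. intros H. unfold sum3. rewrite !H by lia. reflexivity. Qed.

Lemma intQ_sum33 (G : nat -> nat -> ex) t : (forall i j, (i < 3)%nat -> (j < 3)%nat -> OK (G i j)) -> 0 < t ->
  intQ (ev (sum3e (fun i => sum3e (fun j => G i j))) t) = sum3 (fun i => sum3 (fun j => intQ (ev (G i j) t))).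
Proof.
  intros HG Ht. rewrite intQ_sum3e; auto.
  - apply sum3_ext. intros i Hi. apply intQ_sum3e; auto.
  - intros i Hi. unfold sum3e. repeat split; apply HG; lia.
Qed.

Lemma neg_sum33 (a : nat -> nat -> R) : - sum3 (fun i => sum3 (fun j => a i j)) = sum3 (fun i => sum3 (fun j => - a i j)).
Proof. unfold sum3. ring. Qed.

Ltac oku2 HOKu HOKP HOKphi Ht := repeat (first [ match goal with
     | |- OK (EB _ _) => first [exact (HOKP _) | exact (HOKphi _) | (apply HOKu; lia)]
     | |- OK (Ui _ _) => apply HOKu; lia
     | |- OK (dx _ _) => apply OK_dx
     | |- OK (EM _ _) => split
     | |- OK (EA _ _) => split
     | |- OK (sum3e _) => unfold sum3e
     | |- OK (EC _) => exact I
     | |- OK (psi _) => exact (HOKphi _)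
     | |- (_ < _)%nat => lia
     | |- 0 < _ => exact Ht
     end | assumption ]).

Theorem lemma2p3 (k eps gamma mu M1 M2 : R)
  (u : nat -> tfield) (P phi : tfield) :
  0 < k -> 0 < eps -> 0 < gamma -> 0 < mu -> 0 < M1 -> 0 < M2 ->
  (forall i, (i < 3)%nat -> smooth_pos (u i)) -> smooth_pos P -> smooth_pos phi ->
  (forall i t, (i < 3)%nat -> 0 <= t -> periodic (u i t)) ->
  (forall t, 0 <= t -> periodic (P t)) ->
  (forall t, 0 <= t -> periodic (phi t)) ->
  (forall x, sum3 (fun j => pd j (u j 0) x) = 0) ->
  (forall i, (i < 3)%nat -> intQ (u i 0) = 0) ->
  let alpha := Aphi (phi 0) in
  let beta := Bphi eps (phi 0) in
  let dE := fun t => dEphi k eps M1 M2 alpha beta (phi t) in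
  (forall i t x, (i < 3)%nat -> 0 < t ->
     dt (u i) t x + sum3 (fun j => u j t x * pd j (u i t) x) + pd i (P t) x
     = mu * lap (u i t) x + dE t x * pd i (phi t) x) ->
  (forall t x, 0 < t -> sum3 (fun j => pd j (u j t) x) = 0) ->
  (forall t x, 0 < t ->
     dt phi t x + sum3 (fun j => u j t x * pd j (phi t) x) = - gamma * dE t x) ->
  forall t, 0 < t ->
    is_derive
      (fun s => / 2 * sum3 (fun i => nsq (u i s)) + Ephi k eps M1 M2 alpha beta (phi s))
      t
      (- (mu * sum3 (fun i => sum3 (fun j => nsq (pd j (u i t)))) + gamma * nsq (dE t))).
Proof.
  intros Hk Heps Hgamma Hmu HM1 HM2 Hsu HsP Hsphi Hpu HpP Hpphi _ _ alpha beta dE Hu Hdiv Hphi t Ht.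
  assert (HOKu : forall i l, (i < 3)%nat -> OK (EB (u i) l)).
  { intros i l Hi. split. apply Hsu; auto. intros s Hs. apply Hpu; auto. }
  assert (HOKP : forall l, OK (EB P l)). { intros l. split; auto. }
  assert (HOKphi : forall l, OK (EB phi l)). { intros l. split; auto. }
  set (c1 := M1 * (Aphi (phi t) - alpha)). set (c2 := M2 * (Bphi eps (phi t) - beta)).
  set (EE := eE k eps c1 c2 phi).
  assert (HEE : forall x, ev EE t x = dE t x).
  { intros x. unfold EE, c1, c2, dE. apply eE_bridge; auto. }
  assert (OKEE : OK EE) by (unfold EE; okt HOKphi).

  assert (Kd : forall i, (i < 3)%nat -> is_derive (fun s => nsq (u i s)) t
                 (2 * intQ (ev (EM (Ui u i) (EB (u i) (0%nat :: nil))) t))).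
  { intros i Hi.
    apply (is_derive_ext (fun s => intQ (ev (EM (Ui u i) (Ui u i)) s))).
    { intros s. unfold nsq. apply intQ_ext. intros x. cbn [ev Ui iterD fold_right]. ring. }
    replace (2 * intQ (ev (EM (Ui u i) (EB (u i) (0%nat :: nil))) t)) with (intQ (ev (dx 0 (EM (Ui u i) (Ui u i))) t)).
    apply deriv_ev; auto. split; apply HOKu; auto.
    rewrite <- intQ_Cmul by (auto; split; apply HOKu; auto).
    apply intQ_evext. intros x. cbn [ev dx Ui]. ring. }
  assert (Ed := energy_deriv phi eps t HOKphi Hsphi Ht Heps k M1 M2 alpha beta).
  fold c1 c2 EE in Ed.
  assert (D := isd_plus _ _ t _ _ (isd_scal _ t _ (/ 2) (isd_plus _ _ t _ _ (isd_plus _ _ t _ _ (Kd 0%nat ltac:(lia)) (Kd 1%nat ltac:(lia))) (Kd 2%nat ltac:(lia)))) Ed).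
  cbv beta in D.
  match type of D with is_derive _ _ ?v =>
    replace (- (mu * sum3 (fun i => sum3 (fun j => nsq (pd j (u i t)))) + gamma * nsq (dE t))) with v
  end.
  { exact D. }
  clearbody EE. clear Ed D. clearbody dE.
  assert (Hdiv' := fun x => Hdiv t x Ht).
  set (conv := sum3e (fun i => sum3e (fun j => EM (EM (Ui u i) (Ui u j)) (dx (S j) (Ui u i))))).
  set (pres := sum3e (fun i => EM (Ui u i) (dx (S i) (EB P nil)))).
  set (visc := sum3e (fun i => sum3e (fun j => EM (Ui u i) (dx (S j) (dx (S j) (Ui u i)))))).
  set (Tot := EA (sum3e (fun i => EM (Ui u i) (EB (u i) (0%nat :: nil)))) (EM EE (psi phi))).
  set (Tot2 := EA (EA (EA (EM (EC (-1)) conv) (EM (EC (-1)) pres)) (EM (EC mu) visc)) (EM (EC (-gamma)) (EM EE EE))).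
  assert (S1 : intQ (ev Tot t) = sum3 (fun i => intQ (ev (EM (Ui u i) (EB (u i) (0%nat :: nil))) t))
                 + intQ (ev (EM EE (psi phi)) t)).
  { unfold Tot. rewrite intQ_Add by (oku2 HOKu HOKP HOKphi Ht).
    rewrite intQ_sum3e by (intros; oku2 HOKu HOKP HOKphi Ht). reflexivity. }
  assert (S2 : intQ (ev Tot t) = intQ (ev Tot2 t)).
  { apply intQ_evext. intros x. unfold Tot, Tot2, conv, pres, visc.
    cbn [ev sum3e Ui psi dx iterD fold_right Dir].
    rewrite !HEE.
    assert (E0 := Hu 0%nat t x ltac:(lia) Ht). assert (E1 := Hu 1%nat t x ltac:(lia) Ht).
    assert (E2 := Hu 2%nat t x ltac:(lia) Ht). assert (E3 := Hphi t x Ht).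
    unfold lap, sum3 in E0, E1, E2, E3.
    assert (F0 : dt (u 0%nat) t x = mu * (pd 0 (pd 0 (u 0%nat t)) x + pd 1 (pd 1 (u 0%nat t)) x + pd 2 (pd 2 (u 0%nat t)) x)
       + dE t x * pd 0 (phi t) x - (u 0%nat t x * pd 0 (u 0%nat t) x + u 1%nat t x * pd 1 (u 0%nat t) x + u 2%nat t x * pd 2 (u 0%nat t) x)
       - pd 0 (P t) x) by lra.
    assert (F1 : dt (u 1%nat) t x = mu * (pd 0 (pd 0 (u 1%nat t)) x + pd 1 (pd 1 (u 1%nat t)) x + pd 2 (pd 2 (u 1%nat t)) x)
       + dE t x * pd 1 (phi t) x - (u 0%nat t x * pd 0 (u 1%nat t) x + u 1%nat t x * pd 1 (u 1%nat t) x + u 2%nat t x * pd 2 (u 1%nat t) x)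
       - pd 1 (P t) x) by lra.
    assert (F2 : dt (u 2%nat) t x = mu * (pd 0 (pd 0 (u 2%nat t)) x + pd 1 (pd 1 (u 2%nat t)) x + pd 2 (pd 2 (u 2%nat t)) x)
       + dE t x * pd 2 (phi t) x - (u 0%nat t x * pd 0 (u 2%nat t) x + u 1%nat t x * pd 1 (u 2%nat t) x + u 2%nat t x * pd 2 (u 2%nat t) x)
       - pd 2 (P t) x) by lra.
    assert (F3 : dt phi t x = - gamma * dE t x - (u 0%nat t x * pd 0 (phi t) x + u 1%nat t x * pd 1 (phi t) x + u 2%nat t x * pd 2 (phi t) x)) by lra.
    rewrite F0, F1, F2, F3. ring. }
  assert (S3 : intQ (ev Tot2 t) = -1 * intQ (ev conv t) + -1 * intQ (ev pres t) + mu * intQ (ev visc t)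
                 + - gamma * intQ (ev (EM EE EE) t)).
  { unfold Tot2. rewrite !intQ_Add by (unfold conv, pres, visc; oku2 HOKu HOKP HOKphi Ht).
    rewrite !intQ_Cmul by (unfold conv, pres, visc; oku2 HOKu HOKP HOKphi Ht). reflexivity. }
  assert (Cz : intQ (ev conv t) = 0).
  { unfold conv. rewrite (intQ_sum33 (fun i j => EM (EM (Ui u i) (Ui u j)) (dx (S j) (Ui u i)))) by (intros; oku2 HOKu HOKP HOKphi Ht).
    exact (conv_zero u t HOKu Ht Hdiv'). }
  assert (Pz : intQ (ev pres t) = 0).
  { unfold pres. rewrite intQ_sum3e by (intros; oku2 HOKu HOKP HOKphi Ht).
    apply (pres_zero u P t HOKu HOKP Ht Hdiv'). }
  assert (NB : forall i j, nsq (pd j (u i t)) = intQ (ev (EM (dx (S j) (Ui u i)) (dx (S j) (Ui u i))) t)).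
  { intros i j. unfold nsq. apply intQ_ext. intros x. cbn [ev dx Ui iterD fold_right Dir]. ring. }
  assert (Vz : intQ (ev visc t) = - sum3 (fun i => sum3 (fun j => nsq (pd j (u i t))))).
  { unfold visc. rewrite (intQ_sum33 (fun i j => EM (Ui u i) (dx (S j) (dx (S j) (Ui u i))))) by (intros; oku2 HOKu HOKP HOKphi Ht).
    rewrite neg_sum33. apply sum3_ext. intros i Hi. apply sum3_ext. intros j Hj.
    rewrite (visc_eq u t HOKu Ht) by lia. rewrite NB. reflexivity. }
  assert (Dz : nsq (dE t) = intQ (ev (EM EE EE) t)).
  { unfold nsq. apply intQ_ext. intros x. cbn [ev]. rewrite HEE. ring. }
  rewrite Dz.
  assert (Vz' : sum3 (fun i => sum3 (fun j => nsq (pd j (u i t)))) = - intQ (ev visc t)) by lra.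
  rewrite Vz'. unfold sum3 in S1. lra.
Qed.
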